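(* For positive integers $\ell,m$, let $A(\ell,m)$ be the $(\ell+m)\times(\ell+m)$ coloring matrix with entries $a_{ij}=0$ if $i,j>\ell$ and $a_{ij}=1$ otherwise. Then for $1\le i\le\ell$, $$\ell^2F_{A(\ell,m)}^{(i)}(x)^3-2\ell F_{A(\ell,m)}^{(i)}(x)^2+((\ell-m)x+1)F_{A(\ell,m)}^{(i)}(x)-x=0,$$ and for $\ell+1\le i\le\ell+m$, $$mF_{A(\ell,m)}^{(i)}(x)^3+(\ell-m)xF_{A(\ell,m)}^{(i)}(x)^2-xF_{A(\ell,m)}^{(i)}(x)+x^2=0.$$
   Context: A plane tree is an unlabeled rooted tree in which the children of every vertex are linearly ordered. A coloring matrix is a square matrix $A=(a_{ij})$ with entries in $\{0,1\}$. An $A$-coloring of a plane tree assigns to each vertex a color (an index of a row of $A$) such that whenever a vertex of color $j$ is a child of a vertex of color $i$, $a_{ij}=1$. Let $t_A^{(i)}(n)$ be the number of pairs (plane tree with $n$ vertices, $A$-coloring of it) with root color $i$, and $F_A^{(i)}(x)=\sum_{n\ge1}t_A^{(i)}(n)x^n$ (formal power series). *)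

(* Defs.v *)
From mathcomp Require Import all_boot all_order all_algebra.
From Stdlib Require List.
From Stdlib Require Import ClassicalEpsilon.
Set Implicit Arguments. Unset Strict Implicit. Unset Printing Implicit Defensive.
Import GRing.Theory Num.Theory.

(* A coloring matrix of size k: a k x k 0/1 matrix, entries encoded as bool
   (true = 1, false = 0).  Colors are the row indices 'I_k (0-based). *)

(* A plane tree whose vertices carry colors: a node has a color and an
   ordered list of children.  Such an object is exactly a pair
   (plane tree, coloring of its vertices). *)
Inductive ctree (k : nat) : Type :=
  CNode : 'I_k -> list (ctree k) -> ctree k.

Definition croot k (T : ctree k) : 'I_k := let: CNode c _ := T in c.

Fixpoint csize k (T : ctree k) : nat :=
  let: CNode _ ts := T in (sumn (map (@csize k) ts)).+1.

Fixpoint cvalid k (A : 'M[bool]_k) (T : ctree k) : bool :=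
  let: CNode c ts := T in
  all (fun U => A c (croot U) && cvalid A U) ts.

Definition is_tcount k (A : 'M[bool]_k) (i : 'I_k) (n c : nat) : Prop :=
  exists s : list (ctree k),
    List.NoDup s /\
    (forall T, List.In T s <-> (csize T = n /\ croot T = i /\ cvalid A T)) /\
    List.length s = c.

(* t_A^{(i)}(n) (the set is finite, so the count is well defined) *)
Definition tA k (A : 'M[bool]_k) (i : 'I_k) (n : nat) : nat :=
  epsilon (inhabits 0%N) (fun c => is_tcount A i n c).

Definition fps := nat -> int.
Local Open Scope ring_scope.
Definition sadd (f g : fps) : fps := fun n => f n + g n.
Definition sopp (f : fps) : fps := fun n => - f n.
Definition sscale (c : int) (f : fps) : fps := fun n => c * f n.
Definition smul (f g : fps) : fps :=
  fun n => \sum_(j < n.+1) f j * g (n - j)%N.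
Definition sconst (c : int) : fps := fun n => if n == 0%N then c else 0.
Definition sX : fps := fun n => (n == 1%N)%:R.

Definition FA k (A : 'M[bool]_k) (i : 'I_k) : fps :=
  fun n => if n == 0%N then 0 else (tA A i n)%:Z.

(* A(l,m): a_{ij} = 0 iff i,j > l (1-based), i.e. i,j >= l (0-based) *)
Definition Alm (l m : nat) : 'M[bool]_(l + m) :=
  \matrix_(i, j) ~~ ((l <= i)%N && (l <= j)%N).

(* Main.v *)
Require Import Defs.
From mathcomp Require Import all_boot all_order all_algebra.
From Stdlib Require List.
From Stdlib Require Import ClassicalEpsilon.
From mathcomp Require Import zify ring.
Import GRing.Theory Num.Theory.
Set Implicit Arguments. Unset Strict Implicit. Unset Printing Implicit Defensive.


Lemma InE (T : eqType) (x : T) (s : seq T) : List.In x s <-> x \in s.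
Proof.
elim: s => [|y s IH] //=; rewrite in_cons; split.
- by case=> [->|/IH ->]; rewrite ?eqxx ?orbT.
- by case/orP=> [/eqP ->|/IH]; [left|right].
Qed.

Lemma uniq_NoDup (T : eqType) (s : seq T) : uniq s -> List.NoDup s.
Proof.
elim: s => [|x s IH] /=; first by constructor.
case/andP=> nx us; constructor; last exact: IH.
by move/InE; rewrite (negbTE nx).
Qed.

Lemma length_size T (s : seq T) : List.length s = size s.
Proof. by elim: s => //= x s ->. Qed.

Lemma NoDup_flat_map (X Y : Type) (g : X -> list Y) (l : list X) :
  List.NoDup l -> (forall x, List.In x l -> List.NoDup (g x)) ->
  (forall x y z, List.In x l -> List.In y l -> List.In z (g x) -> List.In z (g y) -> x = y) ->
  List.NoDup (List.flat_map g l).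
Proof.
elim: l => [|a l IH] /=; first by constructor.
move=> nd hg hd; inversion nd; subst.
apply: List.NoDup_app.
- by apply: hg; left.
- apply: IH => //; first by move=> x hx; apply: hg; right.
  by move=> x y z hx hy; apply: hd; right.
- move=> z hz /List.in_flat_map [y [hy hzy]].
  have eay : a = y by apply: (hd a y z) => //; [left|right].
  by subst; auto.
Qed.

Lemma NoDup_map_inj (X Y : Type) (g : X -> Y) (l : list X) :
  (forall x y, g x = g y -> x = y) -> List.NoDup l -> List.NoDup (List.map g l).
Proof.
move=> inj; elim: l => [|a l IH] /= nd; first by constructor.
inversion nd; subst; constructor; last exact: IH.
by move/List.in_map_iff=> [x [/inj -> hx]].
Qed.

Lemma length_flat_map (X Y : Type) (g : X -> list Y) (l : list X) :
  List.length (List.flat_map g l) = (\sum_(x <- l) List.length (g x))%N.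
Proof.
elim: l => [|a l IH] /=; first by rewrite big_nil.
by rewrite List.length_app IH big_cons.
Qed.

Lemma sum_const_seq T (s : seq T) (c : nat) : (\sum_(x <- s) c)%N = (c * size s)%N.
Proof. by elim: s => [|x s IH]; rewrite ?big_nil ?big_cons ?IH ?muln0 ?mulnS. Qed.

Lemma NoDup_same_length (X : Type) (l1 l2 : list X) :
  List.NoDup l1 -> List.NoDup l2 -> (forall x, List.In x l1 <-> List.In x l2) ->
  List.length l1 = List.length l2.
Proof.
move=> n1 n2 h; apply/eqP; rewrite eqn_leq; apply/andP; split; apply/leP.
- by apply: List.NoDup_incl_length => // x /h.
- by apply: List.NoDup_incl_length => // x /h.
Qed.

Section Comb.
Variable k : nat.
Variable A : 'M[bool]_k.

Definition fsize (ts : list (ctree k)) := sumn (map (@csize k) ts).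
Definition fv (p : 'I_k -> bool) (ts : list (ctree k)) :=
  all (fun U => p (croot U) && cvalid A U) ts.

Fixpoint Fo (f n : nat) (p : 'I_k -> bool) {struct f} : list (list (ctree k)) :=
  match f with
  | 0 => if n == 0 then [:: [::]] else [::]
  | f'.+1 => if n == 0 then [:: [::]] else
     List.flat_map (fun j => List.flat_map (fun d =>
        if p d then List.flat_map (fun ch =>
           List.map (fun rest => CNode d ch :: rest) (Fo f' (n - j.+1) p))
           (Fo f' j (fun e => A d e))
        else [::]) (index_enum 'I_k)) (iota 0 n)
  end.

Lemma csize_gt0 (T : ctree k) : (0 < csize T)%N.
Proof. by case: T. Qed.

Lemma fsize0 ts : fsize ts = 0%N -> ts = [::].
Proof. by case: ts => //= T ts; rewrite /fsize /=; case: T. Qed.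

Lemma Fo_sound f n p ts : List.In ts (Fo f n p) -> fsize ts = n /\ fv p ts.
Proof.
elim: f n p ts => [|f IH] n p ts /=.
  by case: eqP => // -> [] // <-.
case: eqP => [-> [] // <- //|_].
move/List.in_flat_map=> [j [/InE hj /List.in_flat_map [d [_ ]]]].
case pd: (p d) => //.
move/List.in_flat_map=> [ch [/IH [sch vch] /List.in_map_iff [rest [<- /IH [sr vr]]]]].
rewrite mem_iota in hj.
split; last by rewrite /fv /= pd; apply/andP; split => //; apply/andP; split.

rewrite /fsize /= -/(fsize ch) -/(fsize rest) sch sr; lia.
Qed.

Lemma Fo_complete f n p ts : (n <= f)%N -> fsize ts = n -> fv p ts ->
  List.In ts (Fo f n p).
Proof.
elim: f n p ts => [|f IH] n p ts /=.
  rewrite leqn0 => /eqP -> hs; by rewrite (fsize0 hs); left.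
case: (n =P 0%N) => [-> _ hs|nn0 hn]; first by rewrite (fsize0 hs); left.
case: ts => [|[d ch] rest]; first by move=> h; case: nn0; rewrite -h.
rewrite /fsize /= -/(fsize ch) -/(fsize rest) => hs.
rewrite /fv /= => /andP [/andP [pd vch] vr].
apply/List.in_flat_map; exists (fsize ch); split.
  by apply/InE; rewrite mem_iota; lia.
apply/List.in_flat_map; exists d; split; first by apply/InE; rewrite mem_index_enum.
rewrite pd; apply/List.in_flat_map; exists ch; split.
  by apply: IH => //; lia.
apply/List.in_map_iff; exists rest; split => //.
by apply: IH => //; lia.
Qed.

Lemma Fo_NoDup f n p : List.NoDup (Fo f n p).
Proof.
elim: f n p => [|f IH] n p /=.
  by case: eqP; constructor => //; constructor.
case: eqP => [_|_]; first by constructor => //; constructor.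
apply: NoDup_flat_map.
- by apply: uniq_NoDup; apply: iota_uniq.
- move=> j _; apply: NoDup_flat_map.
  + by apply: uniq_NoDup; apply: index_enum_uniq.
  + move=> d _; case: (p d); last by constructor.
    apply: NoDup_flat_map => //.
    * by move=> ch _; apply: NoDup_map_inj => //; move=> x y; case.
    * move=> x y z _ _ /= /List.in_map_iff [r1 [e1 _]] /List.in_map_iff [r2 [e2 _]].
      rewrite -e2 in e1; congruence.
  + move=> d1 d2 z _ _ /=; case: (p d1) => //; case: (p d2) => //.
    move=> /List.in_flat_map [c1 [_ /List.in_map_iff [r1 [e1 _]]]].
    move=> /List.in_flat_map [c2 [_ /List.in_map_iff [r2 [e2 _]]]].
    rewrite -e2 in e1; congruence.
- move=> j1 j2 z _ _ /=.
  move=> /List.in_flat_map [d1 [_ h1]] /List.in_flat_map [d2 [_ h2]].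
  case: (p d1) h1 => //; case: (p d2) h2 => //.
  move=> /List.in_flat_map [c2 [/Fo_sound [s2 _] /List.in_map_iff [r2 [e2 _]]]].
  move=> /List.in_flat_map [c1 [/Fo_sound [s1 _] /List.in_map_iff [r1 [e1 _]]]].
  rewrite -e2 in e1; rewrite -s1 -s2; congruence.
Qed.

Definition fo n p := List.length (Fo n n p).

Lemma Fo_length f n p : (n <= f)%N -> List.length (Fo f n p) = fo n p.
Proof.
move=> hn; apply: NoDup_same_length; try exact: Fo_NoDup.
move=> ts; split.
- by case/Fo_sound=> h1 h2; apply: Fo_complete.
- by case/Fo_sound=> h1 h2; apply: Fo_complete.
Qed.

Lemma fo_ext n p p' : p =1 p' -> fo n p = fo n p'.
Proof.
move=> e; apply: NoDup_same_length; try exact: Fo_NoDup.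
have ev ts : fv p ts = fv p' ts by apply: eq_all => U; rewrite e.
move=> ts; split.
- by case/Fo_sound=> h1 h2; apply: Fo_complete => //; rewrite -ev.
- by case/Fo_sound=> h1 h2; apply: Fo_complete => //; rewrite ev.
Qed.

Lemma fo0 p : fo 0 p = 1%N.
Proof. by []. Qed.

Lemma Fo_S f n p : Fo f.+1 n.+1 p =
     List.flat_map (fun j => List.flat_map (fun d =>
        if p d then List.flat_map (fun ch =>
           List.map (fun rest => CNode d ch :: rest) (Fo f (n.+1 - j.+1) p))
           (Fo f j (fun e => A d e))
        else [::]) (index_enum 'I_k)) (iota 0 n.+1).
Proof. by []. Qed.

Lemma fo_rec n p : (0 < n)%N ->
  fo n p = (\sum_(j < n) \sum_(d | p d)
              fo j (fun e => A d e) * fo (n - j.+1) p)%N.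
Proof.
case: n => // n _; rewrite /fo Fo_S length_flat_map.
rewrite -/(index_iota 0 n.+1) big_mkord; apply: eq_bigr => j _.
rewrite length_flat_map [RHS]big_mkcond; apply: eq_bigr => d _.
case: (p d); last by []; rewrite length_flat_map.
under eq_bigr => ch _ do rewrite List.length_map.
rewrite sum_const_seq -length_size mulnC.
have hj := ltn_ord j.
have e1 : (j <= n)%N by lia.
have e2 : (n.+1 - j.+1 <= n)%N by lia.
by rewrite (Fo_length _ e1) (Fo_length _ e2).
Qed.

Definition trees n c : list (ctree k) :=
  match n with 0 => [::] | n'.+1 => List.map (CNode c) (Fo n' n' (fun e => A c e)) end.

Lemma trees_tcount n c : is_tcount A c n (List.length (trees n c)).
Proof.
exists (trees n c); split; [|split=> //].
  case: n => [|n] /=; first by constructor.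
  by apply: NoDup_map_inj; [move=> x y; case|exact: Fo_NoDup].
move=> [c' ts]; case: n => [|n] /=.
  by split=> // [[]].
split.
- move/List.in_map_iff=> [ts' [[<- <-] /Fo_sound [h1 h2]]].
  by rewrite -/(fsize ts') h1.
- move=> [[hs] [ec hv]]; apply/List.in_map_iff; exists ts; subst; split=> //.
  by apply: Fo_complete.
Qed.

Lemma tA_trees n c : tA A c n = List.length (trees n c).
Proof.
rewrite /tA; set e := epsilon _ _.
have : is_tcount A c n e by apply: epsilon_spec; exists (List.length (trees n c)); exact: trees_tcount.
move=> [s [ns [hs <-]]].
have [t [nt [ht <-]]] := trees_tcount n c.
apply: NoDup_same_length => // T; rewrite hs ht; tauto.
Qed.

Lemma tA0 c : tA A c 0 = 0%N.
Proof. by rewrite tA_trees. Qed.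

Lemma tAS c n : tA A c n.+1 = fo n (fun e => A c e).
Proof. by rewrite tA_trees /= List.length_map. Qed.

End Comb.

Local Open Scope ring_scope.

Section Trunc.
Variable N : nat.

Definition tp (F : nat -> int) : {poly int} := \poly_(i < N.+1) F i.
Definition rep (F : fps) (p : {poly int}) := forall i, (i <= N)%N -> F i = p`_i.
Definition small (p : {poly int}) := forall i, (i <= N)%N -> p`_i = 0.

Lemma rep_tp F : rep F (tp F).
Proof. by move=> i hi; rewrite coef_poly ltnS hi. Qed.

Lemma rep_add F G p q : rep F p -> rep G q -> rep (sadd F G) (p + q).
Proof. by move=> hF hG i hi; rewrite coefD /sadd hF ?hG. Qed.

Lemma rep_opp F p : rep F p -> rep (sopp F) (- p).
Proof. by move=> hF i hi; rewrite coefN /sopp hF. Qed.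

Lemma rep_scale c F p : rep F p -> rep (sscale c F) (c%:P * p).
Proof. by move=> hF i hi; rewrite coefCM /sscale hF. Qed.

Lemma rep_const c : rep (sconst c) c%:P.
Proof. by move=> i hi; rewrite coefC. Qed.

Lemma rep_X : rep sX 'X.
Proof. by move=> i hi; rewrite coefX. Qed.

Lemma rep_mul F G p q : rep F p -> rep G q -> rep (smul F G) (p * q).
Proof.
move=> hF hG i hi; rewrite coefM /smul; apply: eq_bigr => j _.
have hj := ltn_ord j.
rewrite hF ?hG //; lia.
Qed.

Lemma small_mul p q : small p -> small (q * p).
Proof.
move=> hp i hi; rewrite coefM big1 // => j _.
by rewrite hp ?mulr0 //; lia.
Qed.

Lemma small_add p q : small p -> small q -> small (p + q).
Proof. by move=> hp hq i hi; rewrite coefD hp ?hq ?addr0. Qed.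

Lemma small_opp p : small p -> small (- p).
Proof. by move=> hp i hi; rewrite coefN hp ?oppr0. Qed.

Lemma rep_small F p : rep F p -> small p -> forall i, (i <= N)%N -> F i = 0.
Proof. by move=> hF hp i hi; rewrite hF ?hp. Qed.

Variable k : nat.
Variable A : 'M[bool]_k.

Definition T d := tp (FA A d).
Definition Phi p := tp (fun i => (fo A i p)%:Z).

Lemma Posz_sum (I : Type) (r : seq I) (P : pred I) (F : I -> nat) :
  Posz (\sum_(i <- r | P i) F i)%N = \sum_(i <- r | P i) Posz (F i).
Proof. by rewrite (big_morph Posz PoszD (erefl (Posz 0))). Qed.

Lemma rel1 d : small (T d - 'X * Phi (fun e => A d e)).
Proof.
move=> i hi; rewrite coefB coefXM !coef_poly /FA.
case: i hi => [|i] hi /=; first by rewrite subrr.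
by rewrite !ltnS hi (ltnW hi) tAS subrr.
Qed.

Lemma rel2 p : small (Phi p - 1 - (\sum_(d | p d) T d) * Phi p).
Proof.
move=> i hi; rewrite !coefB coef1 coefM coef_poly ltnS hi.
case: i hi => [|i] hi.
  rewrite big_ord1 coef_sum big1 ?mul0r ?subr0 ?subrr //.
  by move=> d _; rewrite coef_poly.
rewrite big_ord_recl coef_sum big1 ?mul0r ?add0r; last first.
  by move=> d _; rewrite coef_poly.
rewrite subr0 fo_rec // Posz_sum; apply/eqP; rewrite subr_eq0; apply/eqP.
apply: eq_bigr => j _; rewrite Posz_sum coef_sum mulr_suml; apply: eq_bigr => d _.
have hj := ltn_ord j.
rewrite PoszM /T /Phi !coef_poly /= /FA /= tAS.
rewrite /bump leq0n add1n ifT; last by lia.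
rewrite ifT //; lia.
Qed.

End Trunc.


Lemma FA_eq k (A : 'M[bool]_k) d d' : (forall e, A d e = A d' e) -> FA A d =1 FA A d'.
Proof.
move=> h [|n] //; rewrite /FA /= !tAS; congr Posz; exact: fo_ext.
Qed.

Lemma Alm_E l m (d e : 'I_(l + m)) : Alm l m d e = ~~ ((l <= d)%N && (l <= e)%N).
Proof. by rewrite mxE. Qed.

Lemma key l m (a b : 'I_(l+m)) (ha : (a < l)%N) (hb : (l <= b)%N) N :
  small N (T N (Alm l m) a * (1 - l%:R * T N (Alm l m) a - m%:R * T N (Alm l m) b) - 'X)
  /\ small N (T N (Alm l m) b * (1 - l%:R * T N (Alm l m) a) - 'X).
Proof.
set A := Alm l m; set P := T N A a; set Q := T N A b.
have TP (d : 'I_(l+m)) : (d < l)%N -> T N A d = P.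
  move=> hd; rewrite /T /P /tp; apply: eq_poly => i _; apply: FA_eq => e.
  by rewrite !Alm_E [(l <= d)%N]leqNgt hd [(l <= a)%N]leqNgt ha.
have TQ (d : 'I_(l+m)) : (l <= d)%N -> T N A d = Q.
  move=> hd; rewrite /T /Q /tp; apply: eq_poly => i _; apply: FA_eq => e.
  by rewrite !Alm_E hd hb.
have Sa : \sum_(d | A a d) T N A d = l%:R * P + m%:R * Q.
  rewrite (eq_bigl predT); last by move=> d; rewrite Alm_E leqNgt ha.
  rewrite big_split_ord /=.
  rewrite (eq_bigr (fun _ => P)); last by move=> i _; apply: TP; rewrite /= ltn_ord.
  rewrite [X in _ + X](eq_bigr (fun _ => Q)); last by move=> i _; apply: TQ; rewrite /= leq_addr.
  by rewrite !sumr_const !card_ord !mulr_natl.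
have Sb : \sum_(d | A b d) T N A d = l%:R * P.
  rewrite big_mkcond big_split_ord /=.
  rewrite (eq_bigr (fun _ => P)); last first.
    by move=> i _; rewrite Alm_E hb /= leqNgt ltn_ord /=; apply: TP; rewrite /= ltn_ord.
  rewrite [X in _ + X]big1; last by move=> i _; rewrite Alm_E hb /= leq_addr.
  by rewrite addr0 sumr_const card_ord mulr_natl.
have r1 := @rel1 N _ A a; have r2 := @rel1 N _ A b.
have r3 := @rel2 N _ A (fun e => A a e); have r4 := @rel2 N _ A (fun e => A b e).
rewrite Sa -/P in r3; rewrite Sb -/P in r4; rewrite -/P in r1; rewrite -/Q in r2.
set Fa := Phi N A _ in r1 r3; set Fb := Phi N A _ in r2 r4.
split.
- have -> : P * (1 - l%:R * P - m%:R * Q) - 'X =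
    (1 - (l%:R * P + m%:R * Q)) * (P - 'X * Fa) + 'X * (Fa - 1 - (l%:R * P + m%:R * Q) * Fa).
    by ring.
  by apply: small_add; apply: small_mul.
- have -> : Q * (1 - l%:R * P) - 'X =
    (1 - l%:R * P) * (Q - 'X * Fb) + 'X * (Fb - 1 - l%:R * P * Fb).
    by ring.
  by apply: small_add; apply: small_mul.
Qed.

Lemma small_eq N (p q : {poly int}) : p = q -> small N q -> small N p.
Proof. by move=> ->. Qed.

Lemma polyC_nat (n : nat) : (n%:Z)%:P = n%:R :> {poly int}.
Proof. by rewrite -natz polyC_natr. Qed.

Theorem theorem34 (l m : nat) (hl : (0 < l)%N) (hm : (0 < m)%N) :
  (forall i : 'I_(l + m), (i < l)%N ->
     let F := FA (Alm l m) i in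
     forall n : nat,
       sadd (sadd (sscale ((l ^ 2)%N%:Z) (smul F (smul F F)))
                  (sopp (sscale ((2 * l)%N%:Z) (smul F F))))
            (sadd (smul (sadd (sscale (l%:Z - m%:Z) sX) (sconst 1)) F)
                  (sopp sX)) n = 0)
  /\
  (forall i : 'I_(l + m), (l <= i)%N ->
     let F := FA (Alm l m) i in
     forall n : nat,
       sadd (sadd (sscale m%:Z (smul F (smul F F)))
                  (sscale (l%:Z - m%:Z) (smul sX (smul F F))))
            (sadd (sopp (smul sX F)) (smul sX sX)) n = 0).
Proof.
split.
- move=> i hi F n.
  have hb : (l < l + m)%N by rewrite -{1}(addn0 l) ltn_add2l.
  have [k1 k2] := key hi (leqnn l : (l <= Ordinal hb)%N) n.
  have hF : rep n F (T n (Alm l m) i) by exact: rep_tp.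
  set P := T n (Alm l m) i in hF k1 k2; set Q := T n _ _ in k1 k2.
  have hr := (rep_add (rep_add (rep_scale ((l ^ 2)%N%:Z) (rep_mul hF (rep_mul hF hF)))
     (rep_opp (rep_scale ((2 * l)%N%:Z) (rep_mul hF hF))))
     (rep_add (rep_mul (rep_add (rep_scale (l%:Z - m%:Z) (@rep_X n)) (@rep_const n 1)) hF) (@rep_opp n _ _ (@rep_X n)))).
  apply: (rep_small hr); last exact: leqnn.
  rewrite rmorphB /= !polyC_nat natrX natrM.
  set R1 := (X in small _ X) in k1; set R2 := (X in small _ X) in k2.
  apply: (small_eq (q := (1 - l%:R * P) * R1 + (m%:R * P) * R2)).
    by rewrite /R1 /R2; ring.
  by apply: small_add; apply: small_mul.
- move=> i hi F n.
  have ha : (0 < l + m)%N by rewrite addn_gt0 hl.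
  have [k1 k2] := key (hl : (Ordinal ha < l)%N) hi n.
  have hF : rep n F (T n (Alm l m) i) by exact: rep_tp.
  set Q := T n (Alm l m) i in hF k1 k2; set P := T n _ _ in k1 k2.
  have hr := (rep_add (rep_add (rep_scale (m%:Z) (rep_mul hF (rep_mul hF hF)))
     (rep_scale (l%:Z - m%:Z) (rep_mul (@rep_X n) (rep_mul hF hF))))
     (rep_add (rep_opp (rep_mul (@rep_X n) hF)) (rep_mul (@rep_X n) (@rep_X n)))).
  apply: (rep_small hr); last exact: leqnn.
  rewrite rmorphB /= !polyC_nat.
  set R1 := (X in small _ X) in k1; set R2 := (X in small _ X) in k2.
  apply: (small_eq (q := (- (l%:R * Q * Q)) * R1 + (l%:R * P * Q + m%:R * Q * Q - 'X) * R2)).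
    by rewrite /R1 /R2; ring.
  by apply: small_add; apply: small_mul.
Qed.
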